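(* Let $\omega$ be an almost monotone weight on $\mathbb N^2$, and for $j\in\mathbb N$ let $$X_j=(\mathbb D\times\cdots\times\mathbb D\times\overline{B(0,\rho_j)}\times\mathbb D\times\cdots)\times\mathbb D^\infty,$$ where $\overline{B(0,\rho_j)}$ is in the $j$-th coordinate of the first factor. Then $X_j\subset\Delta(\ell^1(\mathbb N^2,\omega))$ for every $j\in\mathbb N$.
   Context: $\mathbb D=\{|z|\le1\}$, $\mathbb D^\infty$ its countable product; $\overline{B(0,r)}=\{|z|\le r\}$; $p_1<p_2<\cdots$ are the primes. A weight on $\mathbb N^2$ (coordinatewise multiplication) is $\omega:\mathbb N^2\to[1,\infty)$ with $\omega(xy)\le\omega(x)\omega(y)$. It is admissible if $\lim_n\omega(l^n,k^n)^{1/n}=1$ for all $(l,k)$. It is almost monotone if either it is admissible, or there is $K>0$ such that $\omega(m_1,n_1)\le K\omega(m_2,n_2)$ whenever either $m_1\mid m_2$ or $n_1\mid n_2$. $\rho_j=\lim_n\omega(p_j^n,1)^{1/n}$. $\ell^1(\mathbb N^2,\omega)$ is the weighted Dirichlet-convolution algebra; its Gel'fand space is identified with the $\omega$-bounded semicharacters (nonzero multiplicative $\chi:\mathbb N^2\to\mathbb C$ with $|\chi|\le\omega$), each identified with the pair of sequences $((\chi(p_i,1))_i,(\chi(1,p_i))_i)$; thus a pair of sequences belongs to $\Delta$ iff the semicharacter it determines is $\omega$-bounded. *)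

(* Defs.v *)
From HB Require Import structures.
From mathcomp Require Import all_boot all_order all_algebra.
From mathcomp Require Import all_classical all_reals all_analysis.
From mathcomp Require Import complex.
Set Implicit Arguments. Unset Strict Implicit. Unset Printing Implicit Defensive.
Import Order.TTheory GRing.Theory Num.Theory.
Import numFieldNormedType.Exports.
Local Open Scope classical_set_scope.
Local Open Scope ring_scope.

Lemma next_prime_ex (m : nat) : exists p, ((m < p) && prime p)%N.
Proof. by case: (prime_above m) => p H1 H2; exists p; rewrite H1 H2. Qed.

Definition next_prime (m : nat) : nat := ex_minn (next_prime_ex m).

(* nth_prime i = p_{i+1}: the primes p_1 < p_2 < ... indexed from 0. *)
Fixpoint nth_prime (i : nat) : nat :=
  match i with
  | 0 => 2
  | i'.+1 => next_prime (nth_prime i')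
  end.

(* A weight on N^2 (N = positive integers, coordinatewise multiplication). *)
Definition is_weight (R : realType) (w : nat -> nat -> R) : Prop :=
  (forall m n, (0 < m)%N -> (0 < n)%N -> 1 <= w m n) /\
  (forall m1 n1 m2 n2, (0 < m1)%N -> (0 < n1)%N -> (0 < m2)%N -> (0 < n2)%N ->
     w (m1 * m2)%N (n1 * n2)%N <= w m1 n1 * w m2 n2).

Definition admissible (R : realType) (w : nat -> nat -> R) : Prop :=
  forall l k, (0 < l)%N -> (0 < k)%N ->
    (fun n : nat => w (l ^ n)%N (k ^ n)%N `^ (n%:R^-1)) @ \oo --> (1 : R).

Definition almost_monotone (R : realType) (w : nat -> nat -> R) : Prop :=
  admissible w \/
  exists K : R, 0 < K /\
    forall m1 n1 m2 n2, (0 < m1)%N -> (0 < n1)%N -> (0 < m2)%N -> (0 < n2)%N ->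
      ((m1 %| m2)%N \/ (n1 %| n2)%N) -> w m1 n1 <= K * w m2 n2.

Definition rho (R : realType) (w : nat -> nat -> R) (j : nat) : R :=
  limn (fun n : nat => w (nth_prime j ^ n)%N 1%N `^ (n%:R^-1)).

(* The semicharacter of N^2 determined by the pair of sequences (a, b):
   chi(m, n) = prod_i a_i^{v_{p_i}(m)} * prod_i b_i^{v_{p_i}(n)}.
   For m >= 1 only primes p_i with i < m can divide m (p_i > i). *)
Definition semichar (R : realType) (a b : nat -> R[i]) (m n : nat) : R[i] :=
  (\prod_(i < m) a i ^+ logn (nth_prime i) m) *
  (\prod_(i < n) b i ^+ logn (nth_prime i) n).

(* (a, b) belongs to the Gel'fand space Delta(l^1(N^2, w)):
   the determined semicharacter is w-bounded. *)
Definition in_Delta (R : realType) (w : nat -> nat -> R) (a b : nat -> R[i]) : Prop :=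
  forall m n, (0 < m)%N -> (0 < n)%N -> `|semichar a b m n| <= ((w m n)%:C)%C.

(* Main.v *)
Require Import Defs.
From HB Require Import structures.
From mathcomp Require Import all_boot all_order all_algebra.
From mathcomp Require Import all_classical all_reals all_analysis.
From mathcomp Require Import complex.
From mathcomp Require Import ring lra.
Import Order.TTheory GRing.Theory Num.Theory.
Local Open Scope ring_scope.
Set Implicit Arguments.

Lemma nth_prime_gt0 i : (0 < nth_prime i)%N.
Proof.
case: i => [//|i] /=; rewrite /next_prime.
by case: ex_minnP => p /andP [_ pp] _; exact: prime_gt0.
Qed.

Lemma wpow (R : realType) (w : nat -> nat -> R) (hw : is_weight w) m n N :
  (0 < m)%N -> (0 < n)%N -> w (m ^ N.+1)%N (n ^ N.+1)%N <= w m n ^+ N.+1.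
Proof.
move=> m0 n0; case: hw => h1 h2; elim: N => [|N IH]; first by rewrite !expn1 expr1.
rewrite (expnS m N.+1) (expnS n N.+1) (exprS _ N.+1).
have e1 : (0 < m ^ N.+1)%N by rewrite expn_gt0 m0.
have e2 : (0 < n ^ N.+1)%N by rewrite expn_gt0 n0.
apply: le_trans (h2 _ _ _ _ m0 n0 e1 e2) _.
apply: ler_wpM2l; last exact: IH.
by apply: le_trans (h1 _ _ m0 n0).
Qed.

Lemma bern (R : realType) (x : R) N : 0 <= x -> 1 + N%:R * x <= (1 + x) ^+ N.
Proof.
move=> x0; elim: N => [|N IH]; first by rewrite mul0r addr0 expr0.
rewrite exprS -natr1.
have h : 0 <= N%:R * x by apply: mulr_ge0.
nra.
Qed.

Lemma sub_le (R : realType) (w : nat -> nat -> R) (hw : is_weight w) p M q :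
  (0 < p)%N -> (0 < M)%N ->
  w (p ^ (q.+1 * M))%N 1%N `^ ((q.+1 * M)%N%:R^-1) <= w (p ^ M)%N 1%N `^ (M%:R^-1).
Proof.
move=> p0 M0.
have pM : (0 < p ^ M)%N by rewrite expn_gt0 p0.
have w0 : 0 <= w (p ^ M)%N 1%N.
  by have := proj1 hw _ _ pM (isT : (0 < 1)%N); apply: le_trans.

have h := @wpow _ _ hw _ 1%N q pM (isT : (0 < 1)%N).
rewrite exp1n -expnM mulnC in h.
apply: le_trans.
  apply: (ge0_ler_powR _ _ _ h).
  - by rewrite invr_ge0.
  - rewrite nnegrE; have : (0 < p ^ (q.+1 * M))%N by rewrite expn_gt0 p0.
    by move=> h0; have := proj1 hw _ _ h0 (isT : (0 < 1)%N); apply: le_trans.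
  - by rewrite nnegrE exprn_ge0.
rewrite -powR_mulrn // -powRrM natrM invfM mulrA mulfV ?mul1r //.
Qed.

Lemma rho_le (R : realType) (w : nat -> nat -> R) (hw : is_weight w) j M :
  (0 < M)%N -> rho w j <= w (nth_prime j ^ M)%N 1%N `^ (M%:R^-1).
Proof.
move=> M0; rewrite /rho.
set s := fun n : nat => _.
have p0 := nth_prime_gt0 j.
case: (pselect (cvgn s)) => [cs|ncs]; last by rewrite dvgP // powR_ge0.
rewrite leNgt; apply/negP => lt.
have := cvgr_gt _ cs _ lt; case=> N _ HN.
have : (N <= N.+1 * M)%N by rewrite (leq_trans (leqnSn N)) // leq_pmulr.
move=> /HN /=; rewrite /s; apply/negP; rewrite -leNgt.
exact: sub_le.
Qed.

Lemma rho_adm (R : realType) (w : nat -> nat -> R) j :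
  admissible w -> rho w j = 1.
Proof.
move=> ad; have := ad (nth_prime j) 1%N (nth_prime_gt0 j) isT.
have -> : (fun n : nat => w (nth_prime j ^ n)%N (1 ^ n)%N `^ n%:R^-1) =
  (fun n : nat => w (nth_prime j ^ n)%N 1%N `^ n%:R^-1).
  by apply: funext => n; rewrite exp1n.
by move=> h; rewrite /rho; apply: (cvg_lim _ h); exact: Rhausdorff.
Qed.

Lemma key (R : realType) (w : nat -> nat -> R) (hw : is_weight w) (K : R)
  (K0 : 0 < K)
  (hm : forall m1 n1 m2 n2, (0 < m1)%N -> (0 < n1)%N -> (0 < m2)%N -> (0 < n2)%N ->
      ((m1 %| m2)%N \/ (n1 %| n2)%N) -> w m1 n1 <= K * w m2 n2)
  j m n k (m0 : (0 < m)%N) (n0 : (0 < n)%N) (k0 : (0 < k)%N)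
  (dv : (nth_prime j ^ k %| m)%N) (t : R) (t0 : 0 <= t) (ht : t <= rho w j) :
  t ^+ k <= w m n.
Proof.
set p := nth_prime j.
have p0 : (0 < p)%N := nth_prime_gt0 j.
set W := w m n.
have W1 : 1 <= W := proj1 hw _ _ m0 n0.
have W0 : 0 < W by apply: lt_le_trans W1.
have step : forall N, (t ^+ k / W) ^+ N.+1 <= K.
  move=> N.
  have kN : (0 < k * N.+1)%N by rewrite muln_gt0 k0.
  have pk : (0 < p ^ (k * N.+1))%N by rewrite expn_gt0 p0.
  have wp0 : 0 <= w (p ^ (k * N.+1))%N 1%N.
    by have := proj1 hw _ _ pk (isT : (0 < 1)%N); apply: le_trans.
  have h1 : t ^+ (k * N.+1) <= w (p ^ (k * N.+1))%N 1%N.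
    have := le_trans ht (@rho_le _ _ hw j _ kN).
    move=> h; have := lerXn2r (k * N.+1) _ _ h.
    rewrite !nnegrE t0 powR_ge0 => /(_ isT isT).
    rewrite -[X in _ <= X -> _]powR_mulrn ?powR_ge0 // -powRrM mulVf ?powRr1 //.
    by rewrite pnatr_eq0 -lt0n.
  have mN : (0 < m ^ N.+1)%N by rewrite expn_gt0 m0.
  have nN : (0 < n ^ N.+1)%N by rewrite expn_gt0 n0.
  have h2 := hm _ _ _ _ pk (isT : (0 < 1)%N) mN nN
     (or_introl (etrans (f_equal (dvdn^~ _) (expnM p k N.+1)) (dvdn_exp2r _ dv))).
  have h3 := @wpow _ _ hw _ _ N m0 n0.
  rewrite expr_div_n ler_pdivrMr ?exprn_gt0 // -exprM.
  apply: le_trans h1 _; apply: le_trans h2 _.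
  by apply: ler_wpM2l; [exact: ltW|].
rewrite leNgt; apply/negP => lt.
set r := t ^+ k / W - 1.
have r0 : 0 < r by rewrite subr_gt0 ltr_pdivlMr // mul1r.
have K0' : 0 <= K / r by rewrite divr_ge0 // ltW.
have := archi_boundP K0'.
set N := Num.Def.archi_bound _ => hN.
have := step N; have := @bern _ r N.+1 (ltW r0).
have e : 1 + r = t ^+ k / W by rewrite /r addrC subrK.
rewrite e => hb hs.
have : (N.+1%:R * r <= K)%R.
  by apply: le_trans hs; apply: le_trans hb; rewrite lerDr.
rewrite -ler_pdivlMr // => hh.
have : (N%:R < N.+1%:R :> R) by rewrite ltr_nat.
move=> hlt. have := lt_le_trans (lt_trans hN hlt) hh.
by rewrite ltxx.
Qed.

Unset Implicit Arguments.

Lemma cX (R : realType) (t : R) k : ((t ^+ k)%:C = (t%:C) ^+ k)%C.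
Proof. by rewrite rmorphXn. Qed.

Lemma c0 (R : realType) : ((0 : R)%:C)%C = 0.
Proof. by []. Qed.

Lemma c1 (R : realType) : ((1 : R)%:C)%C = 1.
Proof. by []. Qed.

Theorem mainTheorem8 (R : realType) (w : nat -> nat -> R)
  (hw : is_weight w) (ham : almost_monotone w) (j : nat)
  (a b : nat -> R[i])
  (ha : forall i, i != j -> `|a i| <= 1)
  (haj : `|a j| <= ((rho w j)%:C)%C)
  (hb : forall i, `|b i| <= 1) :
  in_Delta w a b.
Proof.
move=> m n m0 n0.
have [t ta] : exists t : R, `|a j| = (t%:C)%C by eexists; exact: normc_def.
have t0 : 0 <= t by rewrite -lecR -ta normr_ge0.
rewrite ta lecR in haj.
have W1 : 1 <= w m n := proj1 hw _ _ m0 n0.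
have W1c : 1 <= ((w m n)%:C)%C by rewrite -c1 lecR.
rewrite /semichar normrM.
have hB : `|\prod_(i < n) b i ^+ logn (nth_prime i) n| <= 1.
  rewrite normr_prod; apply: prodr_ile1 => i _.
  by rewrite normrX exprn_ge0 ?exprn_ile1.
have hA0 : 0 <= `|\prod_(i < m) a i ^+ logn (nth_prime i) m| by [].
case: (leP t 1) => [t1 | t1].
  have hA : `|\prod_(i < m) a i ^+ logn (nth_prime i) m| <= 1.
    rewrite normr_prod; apply: prodr_ile1 => i _.
    rewrite normrX exprn_ge0 ?exprn_ile1 //.
    case: (eqVneq (val i) j) => [e|ne]; last exact: ha.
    by rewrite e ta -c1 lecR.
  apply: le_trans W1c.
  apply: le_trans (ler_pM (normr_ge0 _) (normr_ge0 _) hA hB) _; by rewrite mulr1.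
case: ham => [adm | [K [K0 hm]]].
  by move: haj; rewrite rho_adm // => /(lt_le_trans t1); rewrite ltxx.
set k := logn (nth_prime j) m.
have hA : `|\prod_(i < m) a i ^+ logn (nth_prime i) m| <= ((t ^+ k)%:C)%C.
  rewrite normr_prod.
  case: (ltnP j m) => [jm | mj].
    rewrite (bigD1 (Ordinal jm)) //= normrX ta cX.
    rewrite -[X in _ <= X]mulr1; apply: ler_pM.
    - by rewrite exprn_ge0 // -c0 lecR.
    - by apply: prodr_ge0 => i _; rewrite normr_ge0.
    - by [].
    apply: prodr_ile1 => i ij.
    rewrite normrX exprn_ge0 ?exprn_ile1 //; exact: ha.
  apply: le_trans (_ : 1 <= _).
    apply: prodr_ile1 => i _.
    rewrite normrX exprn_ge0 ?exprn_ile1 //; apply: ha.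
    by apply/eqP => e; move: (ltn_ord i); rewrite e ltnNge mj.
  by rewrite -c1 lecR exprn_ege1 // ltW.
have hk : t ^+ k <= w m n.
  case: (posnP k) => [-> | k0]; first by rewrite expr0.
  exact: (@key R w hw K K0 hm j m n k m0 n0 k0 (pfactor_dvdnn _ _) t t0 haj).
apply: le_trans (_ : ((t ^+ k)%:C)%C * 1 <= _).
  by apply: ler_pM.
by rewrite mulr1 lecR.
Qed.
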